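(* Let $\Gamma$ be a finite simple graph on $n$ vertices and let $\alpha,\beta\models n$ be compositions such that $\beta$ refines $\alpha$ (i.e. $\alpha$ is obtained from $\beta$ by adding together some groups of consecutive parts). Then $\zeta_\alpha(\Gamma)\le\zeta_\beta(\Gamma)$.
   Context: For a coloring $\lambda:V\to\mathbb{N}$ of a finite simple graph $\Gamma$ with values $i_1<\dots<i_k$, let $I_j=\lambda^{-1}(\{i_1,\dots,i_j\})$, $I_0=\emptyset$. It is ordered if for each $j$, no two distinct vertices $u,w$ with $\lambda(u)=\lambda(w)=i_j$ are joined by a path in $\Gamma$ (possibly a single edge) all of whose internal vertices lie in $I_{j-1}$. Its type is $(|\lambda^{-1}(i_1)|,\dots,|\lambda^{-1}(i_k)|)$. For a composition $\alpha$ of $n$ with $k(\alpha)$ parts, $\zeta_\alpha(\Gamma)$ is the number of surjective ordered colorings $\lambda:V\to\{1,\dots,k(\alpha)\}$ of type $\alpha$. *)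

(* Defs.v *)
From Stdlib Require Import ClassicalEpsilon.
From mathcomp Require Import all_boot.
Set Implicit Arguments. Unset Strict Implicit. Unset Printing Implicit Defensive.

Definition pbool (P : Prop) : bool :=
  if excluded_middle_informative P then true else false.

Definition simple_graph (V : finType) (e : rel V) : Prop :=
  symmetric e /\ irreflexive e.

Definition is_composition (n : nat) (a : seq nat) : Prop :=
  all (fun x => 0 < x) a /\ sumn a = n.

(* beta refines alpha: alpha is obtained from beta by adding together
   consecutive groups of parts, i.e. there is a composition g of size beta
   with size alpha parts, with alpha = sums of the blocks of beta cut by g. *)
Definition refines (beta alpha : seq nat) : Prop :=
  exists g : seq nat, is_composition (size beta) g /\
    alpha = map sumn (reshape g beta).

(* Colorings with values in {0,...,k-1} (standing for 1..k). *)
Section Colorings.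
Variables (V : finType) (e : rel V) (k : nat).

Definition ordered_coloring (f : V -> 'I_k) : Prop :=
  forall (u w : V) (q : seq V), u != w -> f u = f w ->
    path e u (rcons q w) -> ~~ all (fun x => (f x < f u)%N) q.

Definition surjective_coloring (f : V -> 'I_k) : bool :=
  [forall i : 'I_k, exists v : V, f v == i].

Definition coloring_type (f : V -> 'I_k) : seq nat :=
  [seq #|[pred v | f v == i]| | i <- enum 'I_k].

End Colorings.

Definition zeta (V : finType) (e : rel V) (alpha : seq nat) : nat :=
  #|[pred f : {ffun V -> 'I_(size alpha)} |
       [&& surjective_coloring f,
           pbool (ordered_coloring e f)
         & coloring_type f == alpha]]|.

(* Main.v *)
Require Import Defs.
From Stdlib Require Import ClassicalEpsilon.
From mathcomp Require Import all_boot zify.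

Lemma pboolP (P : Prop) : pbool P -> P.
Proof. by rewrite /pbool; case: excluded_middle_informative. Qed.
Lemma pboolT (P : Prop) : P -> pbool P.
Proof. by rewrite /pbool; case: excluded_middle_informative. Qed.

Lemma card_sep_D1 (V : finType) (S : {set V}) (P : pred V) v : v \in S ->
  #|[set x in S | P x]| = #|[set x in S :\ v | P x]| + P v.
Proof.
move=> Hv; rewrite (cardsD1 v) addnC inE Hv /=; congr (_ + _).
by apply: eq_card => x; rewrite !inE; case: (x == v); case: (x \in S).
Qed.

Arguments card_sep_D1 {V S} P {v}.

Lemma split_exists (V I J : finType) (i0 : I) (f : V -> J) (phi : I -> J) :
  forall (S : {set V}) (w : I -> nat),
  (forall j, #|[set v in S | f v == j]| = \sum_(i | phi i == j) w i) ->
  exists g : V -> I, (forall v, v \in S -> phi (g v) = f v) /\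
                     (forall i, #|[set v in S | g v == i]| = w i).
Proof.
move=> S; move: {2}#|S| (erefl #|S|) => n; elim: n S => [|n IH] S HS w Hw.
  have S0 : S = set0 by apply/eqP; rewrite -cards_eq0 HS.
  have Hle : forall P : pred V, #|[set x in S | P x]| = 0.
    move=> P; apply/eqP; rewrite -leqn0 -HS; apply: subset_leq_card.
    by apply/subsetP => x; rewrite inE => /andP [].
  exists (fun _ => i0); split=> [v|i]; first by rewrite S0 inE.
  have := Hw (phi i); rewrite Hle (bigD1 i) //= Hle.
  by case: (w i).
have /card_gt0P [v Hv] : 0 < #|S| by rewrite HS.
set j := f v.
have [i /andP [/eqP Hij Hwi]] : exists i, (phi i == j) && (0 < w i).
  case: (boolP [exists i, (phi i == j) && (0 < w i)]) => [/existsP //|].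
  move=> /existsPn Hn; have := Hw j; rewrite big1.
    by rewrite (card_sep_D1 _ Hv) /j eqxx addn1.
  by move=> i Hi; have := Hn i; rewrite Hi /=; case: (w i).
pose w' := fun i' => w i' - (i' == i).
have Ew : forall i', w i' = w' i' + (i' == i).
  move=> i'; rewrite /w'; case: eqP => [->|_]; last by rewrite subn0 addn0.
  by rewrite subnK.
have HS' : #|S :\ v| = n by move: HS; rewrite (cardsD1 v) Hv add1n => -[].
have Hw' : forall j', #|[set x in S :\ v | f x == j']| = \sum_(i' | phi i' == j') w' i'.
  move=> j'; apply/(@addIn (f v == j')).
  rewrite -card_sep_D1 // Hw.
  rewrite (eq_bigr (fun i' => w' i' + (i' == i))) //.
  rewrite big_split /=; congr (_ + _).
  case: (boolP (phi i == j')) => Hpi.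
    rewrite (bigD1 i) //= eqxx big1 ?addn0.
      by rewrite -(eqP Hpi) Hij eqxx.
    by move=> k /andP [_ /negbTE ->].
  rewrite big1; first by have Hij' : phi i = f v := Hij; rewrite -Hij' (negbTE Hpi).
  by move=> k Hk; case: eqP => // Eki; move: Hpi; rewrite -Eki Hk.
have [g' [Hg'1 Hg'2]] := IH _ HS' w' Hw'.
exists (fun x => if x == v then i else g' x); split.
  move=> x Hx; case: eqP => [->|/eqP Nx]; first by rewrite Hij.
  by apply: Hg'1; rewrite !inE Nx.
move=> i'; rewrite (card_sep_D1 _ Hv) eqxx Ew -Hg'2 eq_sym; congr (_ + _).
by apply: eq_card => x; rewrite !inE; case: eqP.
Qed.

Lemma eq_sym_neq (T : eqType) (x u : T) : x != u -> u != x.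
Proof. by rewrite eq_sym. Qed.

Lemma ordered_mono (V : finType) (e : rel V) k (f : V -> 'I_k) :
  ordered_coloring e f -> forall u w q, u != w -> f u = f w ->
  path e u (rcons q w) -> all (fun x => f x <= f u) q -> False.
Proof.
move=> Hf u w q Huw Hfuw.
suff H: forall q p, all (fun x => f x < f u) p -> path e u (p ++ rcons q w) ->
   all (fun x => f x <= f u) q -> False by move=> Hp Hq; exact: (H q [::] isT Hp Hq).
elim=> [|x q' IH] p Hp.
  rewrite /= cats1 => Hpath _. by move: (Hf u w p Huw Hfuw Hpath); rewrite Hp.
rewrite rcons_cons /= => Hpath /andP [Hx Hq].
case: (ltnP (f x) (f u)) => Hxu.
  apply: (IH (rcons p x)) => //; first by rewrite all_rcons Hxu Hp.
  by rewrite cat_rcons.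
have Efx : f x = f u by apply/val_inj/eqP; rewrite eqn_leq Hx Hxu.
case: (eqVneq x u) => [Exu | Nxu].
  subst x; apply: (IH [::]) => //.
  by move: Hpath; rewrite cat_path /= => /andP [_ /andP [_ ->]].
have Hp2 : path e u (rcons p x).
  by move: Hpath; rewrite cat_path rcons_path /= => /andP [-> /andP [-> _]].
by move: (Hf u x p (eq_sym_neq _ _ _ Nxu) (esym Efx) Hp2); rewrite Hp.
Qed.

Lemma reshape_index_char gr i j : i < sumn gr ->
  (reshape_index gr i == j) =
  (sumn (take j gr) <= i) && (i < sumn (take j gr) + nth 0 gr j).
Proof.
move=> Hi; have Hc := reshape_offsetP Hi; have Hk := reshape_indexK gr i.
move: Hc Hk; rewrite /flatten_index.
set r := reshape_index gr i; set c := reshape_offset gr i => Hc Hk.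
apply/idP/idP => [/eqP Er|/andP [H1 H2]].
  rewrite -Er; apply/andP; split; lia.
rewrite /r; have -> : i = flatten_index gr j (i - sumn (take j gr)) by rewrite /flatten_index; lia.
rewrite flatten_indexKl //; lia.
Qed.

Lemma sumn_take_le n s : sumn (take n s) <= sumn s.
Proof. by rewrite -{2}(cat_take_drop n s) sumn_cat leq_addr. Qed.

Lemma shift_sum s m (F : nat -> nat) :
  \sum_(s <= i < s + m) F i = \sum_(0 <= i < m) F (i + s).
Proof. by rewrite -{1}[s]add0n big_addn addKn. Qed.

Lemma reshape_sum (gr beta : seq nat) (j : nat) : sumn gr = size beta -> j < size gr ->
  \sum_(0 <= i < size beta | reshape_index gr i == j) nth 0 beta i
   = sumn (nth [::] (reshape gr beta) j).
Proof.
move=> Hs Hj; rewrite nth_reshape.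
set s := sumn (take j gr); set m := nth 0 gr j.
have Hsm : s + m <= size beta.
  by rewrite -Hs /s /m -sumn_rcons -take_nth // sumn_take_le.
rewrite big_mkcond /=.
rewrite (big_cat_nat _ (n := s)) //=; last by lia.
rewrite (big_cat_nat _ (m := s) (n := s + m)) //= ?leq_addr //.
rewrite [X in X + _]big1_seq ?add0n; last first.
  move=> i; rewrite mem_index_iota => Hi.
  by rewrite reshape_index_char ?Hs; [case: ifP => //; lia | lia].
rewrite [X in _ + X]big1_seq ?addn0; last first.
  move=> i; rewrite mem_index_iota => Hi.
  by rewrite reshape_index_char ?Hs; [case: ifP => //; lia | lia].
rewrite (eq_big_nat _ _ (F2 := fun i => nth 0 beta i)); last first.
  by move=> i Hi; rewrite reshape_index_char ?Hs; [case: ifP => //; lia | lia].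
rewrite sumnE [RHS](big_nth 0) size_takel ?size_drop; last by lia.
rewrite shift_sum; apply: eq_big_nat => i Hi.
by rewrite nth_take // nth_drop addnC.
Qed.

Theorem mainTheorem13 (V : finType) (e : rel V) (alpha beta : seq nat) :
  simple_graph e ->
  is_composition #|V| alpha ->
  is_composition #|V| beta ->
  refines beta alpha ->
  zeta e alpha <= zeta e beta.
Proof.
move=> _ [Ha0 Has] [Hb0 Hbs] [gr [[Hg0 Hgs] Ha]].
case: (posnP (size beta)) => Hkb.
  have Egr : gr = [::].
    by case: gr Hg0 Hgs {Ha} => [|x g] //= /andP [Hx _]; rewrite Hkb => H; exfalso; lia.
  by rewrite Ha Egr (size0nil Hkb).
pose i0 : 'I_(size beta) := Ordinal Hkb.
have Hlt : forall i : 'I_(size beta), reshape_index gr i < size alpha.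
  by move=> i; rewrite Ha size_map size_reshape; apply: reshape_indexP; rewrite Hgs ltn_ord.
pose phi := fun i => Ordinal (Hlt i).
have Hmono : forall i1 i2 : 'I_(size beta), i1 <= i2 -> phi i1 <= phi i2.
  move=> i1 i2; rewrite /= (reshape_leq gr) => /orP [/ltnW // | /andP [/eqP -> _]] //.
have Hsum : forall j : 'I_(size alpha),
    nth 0 alpha j = \sum_(i | phi i == j) nth 0 beta i.
  move=> j.
  rewrite (eq_bigl (fun i : 'I_(size beta) => reshape_index gr i == j)) //.
  rewrite -(big_mkord (fun i => reshape_index gr i == j) (fun i => nth 0 beta i)).
  have Hj : j < size gr by rewrite -(size_reshape gr beta) -(size_map sumn) -Ha.
  rewrite reshape_sum //; move: (nat_of_ord j) Hj => jn Hjn.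
  by rewrite Ha (nth_map [::]) // size_reshape.
rewrite /zeta.
pose Phi := fun g : {ffun V -> 'I_(size beta)} =>
  ([ffun v => phi (g v)] : {ffun V -> 'I_(size alpha)}).
set B := [pred g : {ffun V -> 'I_(size beta)} | _].
apply: (@leq_trans #|Phi @: [set g in B]|); last first.
  by rewrite (leq_trans (leq_imset_card _ _)) // cardsE.
apply: subset_leq_card; apply/subsetP => f; rewrite inE => /and3P [Hsf Hof Htf].
have Hcnt : forall j, #|[set v in [set: V] | f v == j]| = \sum_(i | phi i == j) nth 0 beta i.
  move=> j; rewrite -Hsum.
  have -> : nth 0 alpha j = nth 0 (coloring_type f) j by rewrite (eqP Htf).
  rewrite /coloring_type (nth_map j) ?size_enum_ord //.
  by rewrite nth_ord_enum; apply: eq_card => v; rewrite !inE.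
have [g [Hg1 Hg2]] := split_exists _ _ _ i0 f phi _ _ Hcnt.
pose G : {ffun V -> 'I_(size beta)} := [ffun v => g v].
have HfG : forall v, f v = phi (G v) by move=> v; rewrite ffunE Hg1 ?inE.
apply/imsetP; exists G; last by apply/ffunP => v; rewrite !ffunE Hg1 ?inE.
rewrite inE; apply/and3P; split.
- apply/forallP => i.
  have : 0 < #|[set v in [set: V] | g v == i]|.
    by rewrite Hg2; exact: ((all_nthP 0 Hb0) i (ltn_ord i)).
  move=> /card_gt0P [v]; rewrite !inE => Hv; apply/existsP; exists v; by rewrite ffunE.
- apply: pboolT => u w q Huw Eg Hp; apply/negP => Hall.
  apply: (ordered_mono _ _ _ _ (pboolP _ Hof) _ _ _ Huw _ Hp); first by rewrite !HfG Eg.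
  apply/allP => x /(allP Hall) /= Hx; rewrite !HfG; apply: Hmono; exact: ltnW Hx.
- apply/eqP; apply: (@eq_from_nth _ 0); first by rewrite size_map size_enum_ord.
  move=> i; rewrite size_map size_enum_ord => Hi.
  rewrite (nth_map i0) ?size_enum_ord //.
  have -> : nth i0 (enum 'I_(size beta)) i = Ordinal Hi.
    by apply: val_inj; rewrite /= nth_enum_ord.
  rewrite -(Hg2 (Ordinal Hi)); by apply: eq_card => v; rewrite !inE ffunE.
Qed.
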